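(* Let $(x^k,\lambda^k)_{k\ge0}$ be generated by the proximal ADMM applied to (P), and for $k\ge1$ let $E(k)=L_\rho(x^k,\lambda^k)+\sum_{i=0}^n\frac{1}{4\eta_i}\|x_i^k-x_i^{k-1}\|^2$. Then for every $k\ge1$, $$E(k+1)-E(k)\le\sum_{i=0}^{n-1}\frac{1}{\rho_i}\|\lambda_i^{k+1}-\lambda_i^k\|^2-\sum_{i=0}^n\frac{1}{4\eta_i}\Big(\|x_i^{k+1}-x_i^k\|^2+\|x_i^k-x_i^{k-1}\|^2\Big).$$
   Context: Let $n,d\ge1$, and let $f_0,\dots,f_n:\mathbb{R}^d\to\mathbb{R}$ and $\varphi:\mathbb{R}^d\to\mathbb{R}^d$ be continuously differentiable. Problem (P): minimize $\sum_{i=0}^n f_i(x_i)$ over $x=(x_0,\dots,x_n)\in(\mathbb{R}^d)^{n+1}$ subject to $x_{j+1}=\varphi(x_j)$ for $j=0,\dots,n-1$. For penalty parameters $\rho=(\rho_0,\dots,\rho_{n-1})$, $\rho_i>0$, and $\lambda=(\lambda_0,\dots,\lambda_{n-1})\in(\mathbb{R}^d)^n$ the augmented Lagrangian is $L_\rho(x,\lambda)=\sum_{i=0}^n f_i(x_i)+\sum_{i=0}^{n-1}\big(\langle\lambda_i,x_{i+1}-\varphi(x_i)\rangle+\frac{\rho_i}{2}\|x_{i+1}-\varphi(x_i)\|^2\big)$. Proximal ADMM: given $\eta_0,\dots,\eta_n>0$ and an initial point $(x^0,\lambda^0)$, for $k=0,1,\dots$, for $i=0,1,\dots,n$ in this order,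 $x_i^{k+1}$ is a (global) minimizer over $x_i\in\mathbb{R}^d$ of $L_\rho(x_0^{k+1},\dots,x_{i-1}^{k+1},x_i,x_{i+1}^k,\dots,x_n^k,\lambda^k)+\frac{1}{2\eta_i}\|x_i-x_i^k\|^2$ (assumed to exist), and then $\lambda_j^{k+1}=\lambda_j^k+\rho_j(x_{j+1}^{k+1}-\varphi(x_j^{k+1}))$ for $j=0,\dots,n-1$. *)

(* Defs.v *)
From HB Require Import structures.
From mathcomp Require Import all_boot all_order all_algebra.
From mathcomp Require Import all_classical all_reals all_analysis.
Set Implicit Arguments. Unset Strict Implicit. Unset Printing Implicit Defensive.
Import Order.TTheory GRing.Theory Num.Theory.
Import numFieldNormedType.Exports.
Local Open Scope ring_scope.

Definition dotv {R : realType} {d : nat} (u v : 'rV[R]_d) : R :=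
  \sum_(j < d) u 0 j * v 0 j.
Definition sqnorm {R : realType} {d : nat} (u : 'rV[R]_d) : R := dotv u u.

(* continuously differentiable: differentiable everywhere, and the
   derivative x |-> 'd f x is continuous (tested on every direction v,
   which in finite dimension is continuity of the derivative). *)
Definition C1 {R : realType} {d e : nat} (f : 'rV[R]_d -> 'rV[R]_e) : Prop :=
  (forall x, differentiable f x) /\ (forall v, continuous (fun x => 'd f x v)).
Definition C1r {R : realType} {d : nat} (f : 'rV[R]_d -> R) : Prop :=
  (forall x, differentiable f x) /\ (forall v, continuous (fun x => 'd f x v)).

(* Blocks x = (x_0,...,x_n) are encoded as nat-indexed families; only the
   indices 0..n (resp. 0..n-1 for multipliers) are ever used. *)
Definition augL {R : realType} {d : nat} (n : nat) (f : nat -> 'rV[R]_d -> R)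
  (phi : 'rV[R]_d -> 'rV[R]_d) (rho : nat -> R)
  (x : nat -> 'rV[R]_d) (lam : nat -> 'rV[R]_d) : R :=
  \sum_(0 <= i < n.+1) f i (x i)
  + \sum_(0 <= i < n) (dotv (lam i) (x i.+1 - phi (x i))
                       + rho i / 2 * sqnorm (x i.+1 - phi (x i))).

Definition gsPoint {R : realType} {d : nat} (xnew xold : nat -> 'rV[R]_d)
  (i : nat) (y : 'rV[R]_d) : nat -> 'rV[R]_d :=
  fun j => if (j < i)%N then xnew j else if j == i then y else xold j.

Definition energy {R : realType} {d : nat} (n : nat) (f : nat -> 'rV[R]_d -> R)
  (phi : 'rV[R]_d -> 'rV[R]_d) (rho eta : nat -> R)
  (x lam : nat -> nat -> 'rV[R]_d) (k : nat) : R :=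
  augL n f phi rho (x k) (lam k)
  + \sum_(0 <= i < n.+1) (4 * eta i)^-1 * sqnorm (x k i - x k.-1 i).

(* Main.v *)
Require Import Defs.
From HB Require Import structures.
From mathcomp Require Import all_boot all_order all_algebra.
From mathcomp Require Import all_classical all_reals all_analysis.
From mathcomp Require Import ring lra.
Import Order.TTheory GRing.Theory Num.Theory.
Import numFieldNormedType.Exports.
Local Open Scope ring_scope.

Lemma dotvBl (R : realType) (d : nat) (u v w : 'rV[R]_d) :
  dotv (u - v) w = dotv u w - dotv v w.
Proof. by rewrite /dotv -sumrB; apply: eq_bigr => j _; rewrite !mxE mulrBl. Qed.

Lemma dotvZl (R : realType) (d : nat) (a : R) (u w : 'rV[R]_d) :
  dotv (a *: u) w = a * dotv u w.
Proof. by rewrite /dotv mulr_sumr; apply: eq_bigr => j _; rewrite !mxE mulrA. Qed.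

Lemma dotvZr (R : realType) (d : nat) (a : R) (u w : 'rV[R]_d) :
  dotv u (a *: w) = a * dotv u w.
Proof.
by rewrite /dotv mulr_sumr; apply: eq_bigr => j _; rewrite !mxE mulrCA.
Qed.

Lemma sqnorm0 (R : realType) (d : nat) : sqnorm (0 : 'rV[R]_d) = 0.
Proof. by rewrite /sqnorm /dotv big1 // => j _; rewrite mxE mul0r. Qed.

Lemma augL_ext (R : realType) (d n : nat) (f : nat -> 'rV[R]_d -> R)
  (phi : 'rV[R]_d -> 'rV[R]_d) (rho : nat -> R) (x y lam : nat -> 'rV[R]_d) :
  (forall j, (j <= n)%N -> x j = y j) ->
  augL n f phi rho x lam = augL n f phi rho y lam.
Proof.
move=> H; rewrite /augL; congr (_ + _); apply: eq_big_nat => i /andP[_ hi].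
  by rewrite H.
by rewrite !H // ltnW.
Qed.

Lemma augL_dual (R : realType) (d n : nat) (f : nat -> 'rV[R]_d -> R)
  (phi : 'rV[R]_d -> 'rV[R]_d) (rho : nat -> R) (x lam lam' : nat -> 'rV[R]_d) :
  augL n f phi rho x lam' - augL n f phi rho x lam =
  \sum_(0 <= i < n) dotv (lam' i - lam i) (x i.+1 - phi (x i)).
Proof.
rewrite /augL opprD addrACA subrr add0r -sumrB; apply: eq_bigr => i _.
rewrite dotvBl; lra.
Qed.

Lemma tele (R : realType) (d n : nat) (f : nat -> 'rV[R]_d -> R)
  (phi : 'rV[R]_d -> 'rV[R]_d) (rho eta : nat -> R) (xn xo lam : nat -> 'rV[R]_d) :
  (forall i, (i <= n)%N -> forall y : 'rV[R]_d,
      augL n f phi rho (gsPoint xn xo i (xn i)) lam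
        + (2 * eta i)^-1 * sqnorm (xn i - xo i)
      <= augL n f phi rho (gsPoint xn xo i y) lam
        + (2 * eta i)^-1 * sqnorm (y - xo i)) ->
  forall m, (m <= n.+1)%N ->
  augL n f phi rho (gsPoint xn xo m (xo m)) lam
  + \sum_(0 <= i < m) (2 * eta i)^-1 * sqnorm (xn i - xo i)
  <= augL n f phi rho xo lam.
Proof.
move=> H; elim=> [_|m IH hm].
  rewrite big_geq // addr0.
  have -> : gsPoint xn xo 0 (xo 0) = xo.
    by apply: funext => j; rewrite /gsPoint; case: eqP => // ->.
  by [].
have hmn : (m <= n)%N by [].
have := H m hmn (xo m); rewrite subrr sqnorm0 mulr0 addr0.
have -> : gsPoint xn xo m (xn m) = gsPoint xn xo m.+1 (xo m.+1).
  apply: funext => j; rewrite /gsPoint ltnS.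
  have [jm|jm|->] := ltngtP j m.
  - by rewrite ?jm ?(ltnW jm).
  - by case: eqP => // ->.
  - by [].
have := IH (ltnW hm).
rewrite big_nat_recr //=; lra.
Qed.

Theorem mainTheorem3 (R : realType) (n d : nat)
  (f : nat -> 'rV[R]_d -> R) (phi : 'rV[R]_d -> 'rV[R]_d)
  (rho eta : nat -> R)
  (x lam : nat -> nat -> 'rV[R]_d) :
  (1 <= n)%N -> (1 <= d)%N ->
  (forall i, (i <= n)%N -> C1r (f i)) ->
  C1 phi ->
  (forall i, (i < n)%N -> 0 < rho i) ->
  (forall i, (i <= n)%N -> 0 < eta i) ->
  (* x^{k+1}_i is a global minimizer of the proximal block subproblem *)
  (forall k i, (i <= n)%N -> forall y : 'rV[R]_d,
      augL n f phi rho (gsPoint (x k.+1) (x k) i (x k.+1 i)) (lam k)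
        + (2 * eta i)^-1 * sqnorm (x k.+1 i - x k i)
      <= augL n f phi rho (gsPoint (x k.+1) (x k) i y) (lam k)
        + (2 * eta i)^-1 * sqnorm (y - x k i)) ->
  (* multiplier update *)
  (forall k j, (j < n)%N ->
      lam k.+1 j = lam k j + rho j *: (x k.+1 j.+1 - phi (x k.+1 j))) ->
  forall k, (1 <= k)%N ->
    energy n f phi rho eta x lam k.+1 - energy n f phi rho eta x lam k
    <= \sum_(0 <= i < n) (rho i)^-1 * sqnorm (lam k.+1 i - lam k i)
       - \sum_(0 <= i < n.+1) (4 * eta i)^-1 *
           (sqnorm (x k.+1 i - x k i) + sqnorm (x k i - x k.-1 i)).
Proof.
move=> _ _ _ _ hrho heta Hmin Hlam k _.
have T := tele _ _ _ _ _ _ _ _ _ _ (Hmin k) n.+1 (leqnn n.+1).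
rewrite (augL_ext _ _ _ _ _ _ _ (x k.+1)) in T; last first.
  by move=> j hj; rewrite /gsPoint ltnS hj.
have D := augL_dual _ _ n f phi rho (x k.+1) (lam k) (lam k.+1).
have -> : \sum_(0 <= i < n) (rho i)^-1 * sqnorm (lam k.+1 i - lam k i) =
   \sum_(0 <= i < n) dotv (lam k.+1 i - lam k i) (x k.+1 i.+1 - phi (x k.+1 i)).
  apply: eq_big_nat => i /andP[_ hi].
  rewrite Hlam // addrAC subrr add0r /sqnorm dotvZl dotvZr mulKf //.
  by rewrite dotvZl.
  by rewrite gt_eqF // hrho.
rewrite -D /energy /=.
have -> : \sum_(0 <= i < n.+1) (4 * eta i)^-1 *
           (sqnorm (x k.+1 i - x k i) + sqnorm (x k i - x k.-1 i)) =
  \sum_(0 <= i < n.+1) (4 * eta i)^-1 * sqnorm (x k.+1 i - x k i) +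
  \sum_(0 <= i < n.+1) (4 * eta i)^-1 * sqnorm (x k i - x k.-1 i).
  by rewrite -big_split; apply: eq_bigr => i _; rewrite mulrDr.
have E2 : \sum_(0 <= i < n.+1) (2 * eta i)^-1 * sqnorm (x k.+1 i - x k i) =
  2 * \sum_(0 <= i < n.+1) (4 * eta i)^-1 * sqnorm (x k.+1 i - x k i).
  rewrite mulr_sumr; apply: eq_big_nat => i /andP[_ hi].
  have he : eta i != 0 by rewrite gt_eqF // heta.
  rewrite mulrA; congr (_ * _); rewrite !invfM mulrA; congr (_ * _).
  by field.
rewrite E2 in T.
move: T D.
set A := augL _ _ _ _ _ _; set B := augL _ _ _ _ _ _; set C := augL _ _ _ _ _ _.
set S1 := \sum_(0 <= i < n.+1) _; set S0 := \sum_(0 <= i < n.+1) _.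
move=> h1 _; lra.
Qed.
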